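(* Let $G$ be an $(N,k)$ Adinkra obtained from an $N$-cube Adinkra by quotienting by a doubly even $(N,k)$ code $C$ (vertices labeled by cosets $x+C$), with the matrices $\gamma_i$ defined as in the context. Let $M=\gamma_{i_1}\cdots\gamma_{i_t}$ and let $p\in\mathbb{Z}_2^N$ be the vector with $p_i=1$ exactly for the colors $i$ occurring an odd number of times in $(i_1,\dots,i_t)$. Suppose $p$ is a nonzero codeword of $C$ and $M_{x,x}=\pm1$ for all vertices $x$. Then for any two vertices $x+C$ and $y+C$, $M_{x+C,x+C}=M_{y+C,y+C}$ if and only if $\langle x,p\rangle\equiv\langle y,p\rangle\pmod 2$.
   Context: An Adinkra of dimension $N$ is a finite connected simple graph $G=(V,E)$ with: a bipartition of $V$ into bosons and fermions (every edge joins a boson and a fermion); a height function (irrelevant here); a coloring of $E$ by colors $\{1,\dots,N\}$ such that each vertex is incident to exactly one edge of each color; an edge parity $\pi:E\to\mathbb{Z}_2$ (parity $1$ = dashed); such that every path with edge colors $(i,j)$, $i\ne j$, lies in a unique 4-cycle with colors $(i,j,i,j)$, each having an odd number of dashed edges. If $|V|=2^{N-k}$, $G$ is an $(N,k)$ Adinkra; it has $n=2^{N-k-1}$ bosons $b_1,\dots,b_n$ and $n$ fermions $f_1,\dots,f_n$. A doubly even $(N,k)$ code $C$ is a $k$-dimensional subspace of $\mathbb{Z}_2^N$ all of whose elements have weight $\equiv0\pmod4$; $\langle u,v\rangle=\sum_iu_iv_i\bmod2$, and $\langle x,c\rangle$ for $c\in C$ depends only on $x+C$. Quotient construction: label the vertices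 of an $N$-cube Adinkra by $\mathbb{Z}_2^N$ so that color-$i$ edges join $v$ and $v+e_i$, and identify vertices whose labels differ by elements of $C$; the result has vertices $x+C$ and color-$i$ edges joining $x+C$ and $x+e_i+C$. For each color $i$, $L_i$ is the $n\times n$ matrix with $(L_i)_{r,s}=+1$ if $b_r,f_s$ are joined by a solid edge of color $i$, $-1$ if joined by a dashed edge of color $i$, $0$ otherwise; $\gamma_i=\begin{pmatrix}0&L_i\\ L_i^{T}&0\end{pmatrix}$, rows and columns indexed by $V$. *)

(* Defs.v *)
From mathcomp Require Import all_boot all_order all_algebra.
Set Implicit Arguments. Unset Strict Implicit. Unset Printing Implicit Defensive.
Import GRing.Theory.
Local Open Scope ring_scope.

Notation word N := 'rV['F_2]_N.

Definition ebasis (N : nat) (i : 'I_N) : word N := delta_mx 0 i.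

Definition wt (N : nat) (c : word N) : nat := #|[set i : 'I_N | c 0 i != 0]|.

Definition ip (N : nat) (u v : word N) : 'F_2 := \sum_(i < N) u 0 i * v 0 i.

(* A doubly even (N,k) code: a k-dimensional F_2-subspace of Z_2^N
   (over F_2: contains 0, closed under +, 2^k elements) all of whose
   elements have weight divisible by 4. *)
Definition doubly_even_code (N k : nat) (C : {set word N}) : Prop :=
  [/\ 0 \in C, {in C &, forall a b, a + b \in C}, #|C| = (2 ^ k)%N
    & {in C, forall c, (4 %| wt c)%N}].

Definition coset (N : nat) (C : {set word N}) (x : word N) : {set word N} :=
  [set x + c | c in C].

Definition qvert (N : nat) (C : {set word N}) : finType :=
  {A : {set word N} | [exists x, A == coset C x]}.

Lemma coset_is_coset (N : nat) (C : {set word N}) (x : word N) :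
  [exists y, coset C x == coset C y].
Proof. by apply/existsP; exists x. Qed.

Definition cos (N : nat) (C : {set word N}) (x : word N) : qvert C :=
  exist _ (coset C x) (coset_is_coset C x).

(* A dashing of the quotient graph (color-i edges join x+C and x+e_i+C):
   d u i = true iff the color-i edge at vertex u is dashed (parity 1).
   It is a dashing of edges (both endpoints agree), and satisfies the
   Adinkra condition: every (i,j,i,j) 4-cycle, i <> j, has an odd number
   of dashed edges. *)
Definition adinkra_dashing (N : nat) (C : {set word N})
    (d : qvert C -> 'I_N -> bool) : Prop :=
  (forall x i, d (cos C x) i = d (cos C (x + ebasis i)) i) /\
  (forall x i j, i != j ->
     d (cos C x) i (+) d (cos C (x + ebasis i)) j
       (+) d (cos C (x + ebasis j)) i (+) d (cos C x) j = true).

Definition vmx (V : finType) := V -> V -> int.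
Definition vmx_mul (V : finType) (A B : vmx V) : vmx V :=
  fun u v => \sum_(w : V) A u w * B w v.
Definition vmx_one (V : finType) : vmx V := fun u v => (u == v)%:R.

(* gamma_i: entry (u,v) is +1 / -1 if u,v are joined by a solid / dashed
   color-i edge, and 0 otherwise (this is [[0,L_i],[L_i^T,0]] indexed by V). *)
Definition gamma (N : nat) (C : {set word N}) (d : qvert C -> 'I_N -> bool)
    (i : 'I_N) : vmx (qvert C) :=
  fun u v => if val v == [set a + ebasis i | a in val u]
             then (if d u i then -1 else 1) else 0.

Definition gprod (N : nat) (C : {set word N}) (d : qvert C -> 'I_N -> bool)
    (s : seq 'I_N) : vmx (qvert C) :=
  foldr (fun i A => vmx_mul (gamma d i) A) (@vmx_one (qvert C)) s.

Definition parity_word (N : nat) (s : seq 'I_N) : word N :=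
  \row_(i < N) ((odd (count_mem i s))%:R : 'F_2).

(* Main.v *)
Require Import Defs.
From mathcomp Require Import all_boot all_order all_algebra.
From mathcomp Require Import ring zify.
Import GRing.Theory.
Local Open Scope ring_scope.

Lemma F2cases (a : 'F_2) : a = 0 \/ a = 1.
Proof. case: a => [[|[|n]]] //= H; [left|right]; exact: val_inj. Qed.

Lemma F2addxx (a : 'F_2) : a + a = 0.
Proof. by case: (F2cases a) => ->; apply: val_inj. Qed.

Lemma rowaddxx N (p : 'rV['F_2]_N) : p + p = 0.
Proof. by apply/rowP => j; rewrite !mxE F2addxx. Qed.

Definition sg (b : bool) : int := if b then -1 else 1.

Lemma sgsq b : sg b * sg b = 1.
Proof. by case: b. Qed.

Section S.
Variables (N : nat) (C : {set 'rV['F_2]_N}) (d : qvert C -> 'I_N -> bool).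

Fixpoint S (x : 'rV['F_2]_N) (s : seq 'I_N) : int :=
  match s with [::] => 1 | i :: s' => sg (d (cos C x) i) * S (x + ebasis i) s' end.

Lemma coset_shift x e : [set a + e | a in coset C x] = coset C (x + e).
Proof.
rewrite /coset -imset_comp; apply: eq_imset => c /=; by rewrite addrAC.
Qed.

Lemma gprodE s x v :
  gprod d s (cos C x) v =
  if val v == coset C (x + \sum_(i <- s) ebasis i) then S x s else 0.
Proof.
elim: s x => [|i s IH] x /=.
  rewrite big_nil addr0 /vmx_one.
  have -> : (cos C x == v) = (val v == coset C x) by rewrite eq_sym -val_eqE.
  by case: ifP.
rewrite /vmx_mul (bigD1 (cos C (x + ebasis i))) //= big1 ?addr0.
  rewrite /gamma /= coset_shift eqxx IH big_cons addrA.
  rewrite /sg -[sval v]/(val v); case: (val v == _) => //; by rewrite mulr0.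
move=> w hw; rewrite /gamma /= coset_shift.
case: eqP => [hv|]; last by rewrite mul0r.
by exfalso; move/eqP: hw; apply; apply/val_inj.
Qed.


Hypothesis Hd : adinkra_dashing d.

Lemma keyS (j : 'I_N) s x :
  S (x + ebasis j) s = S x s * (-1) ^+ (size s + count_mem j s)
     * sg (d (cos C x) j) * sg (d (cos C (x + \sum_(i <- s) ebasis i)) j).
Proof.
case: Hd => H1 H2.
elim: s x => [|i s IH] x /=.
  by rewrite big_nil addr0; case: (d _ j).
rewrite addrAC IH big_cons addrA.
have loc : sg (d (cos C (x + ebasis j)) i) =
   sg (d (cos C x) i) * (-1) ^+ (1 + (i == j)) * sg (d (cos C x) j)
   * sg (d (cos C (x + ebasis i)) j).
  case: (eqVneq i j) => [<-|hij].
    by rewrite -H1 ?eqxx; case: (d (cos C x) i).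
  move: (H2 x i j hij).
  by case: (d (cos C x) i); case: (d (cos C (x + ebasis i)) j);
     case: (d (cos C (x + ebasis j)) i); case: (d (cos C x) j).
have -> : ((size s).+1 + ((i == j) + count_mem j s) =
   (1 + (i == j)) + (size s + count_mem j s))%N.
  by lia.
rewrite [in RHS]exprD loc.
have hB := sgsq (d (cos C (x + ebasis i)) j).
move: (sg (d (cos C (x + ebasis i)) j)) hB => B hB.
rewrite -[RHS]mulr1 -{1}[X in _ = _ * X]hB.
ring.
Qed.

Definition sgF (a : 'F_2) : int := if a == 0 then 1 else -1.

Lemma sgFD a b : sgF (a + b) = sgF a * sgF b.
Proof.
by case: (F2cases a) => ->; case: (F2cases b) => ->; rewrite /sgF ?add0r ?addr0 ?F2addxx.
Qed.

Lemma sgF_inj a b : sgF a = sgF b -> a = b.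
Proof. by case: (F2cases a) => ->; case: (F2cases b) => ->. Qed.

Lemma F2natb (b : bool) : ((b : nat)%:R : 'F_2) != 0 = b.
Proof. by case: b. Qed.

Lemma sum_e_parity (s : seq 'I_N) : \sum_(i <- s) ebasis i = parity_word s.
Proof.
apply/rowP => j; rewrite summxE !mxE.
elim: s => [|i s IH]; first by rewrite big_nil.
rewrite big_cons IH /= !mxE /= oddD.
rewrite eq_sym; case: (i == j); case: (odd (count_mem j s)) => //=; exact: val_inj.
Qed.

Lemma size_sum (s : seq 'I_N) : size s = (\sum_(j < N) count_mem j s)%N.
Proof.
elim: s => [|i s IH]; first by rewrite big1.
rewrite /= big_split /= -IH (bigD1 i) //= eqxx big1 // => k hk.
by rewrite eq_sym (negbTE hk).
Qed.

Lemma odd_sum_card (c : 'I_N -> nat) :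
  odd (\sum_(j < N) c j) = odd #|[set j | odd (c j)]|.
Proof.
rewrite -sum1_card.
rewrite (@big_morph _ _ odd false _ 0%N _ oddD (erefl false)).
rewrite (@big_morph _ _ odd false _ 0%N _ oddD (erefl false)).
rewrite [RHS]big_mkcond; apply: eq_bigr => j _; rewrite in_set; by case: (odd (c j)).
Qed.

Lemma size_even k (s : seq 'I_N) : doubly_even_code k C -> parity_word s \in C ->
  odd (size s) = false.
Proof.
case=> _ _ _ H4 hp; move: (H4 _ hp); rewrite /wt size_sum odd_sum_card.
have -> : [set i | parity_word s 0 i != 0] = [set j | odd (count_mem j s)].
  by apply/setP => j; rewrite !in_set mxE F2natb.
move=> h; apply/negbTE; rewrite -dvdn2; exact: dvdn_trans h.
Qed.

Lemma cos_p k x p : doubly_even_code k C -> p \in C -> cos C (x + p) = cos C x.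
Proof.
case=> _ Hadd _ _ hp; apply: val_inj => /=.
apply/setP => z; apply/imsetP/imsetP => [[c hc ->]|[c hc ->]].
  by exists (p + c); [exact: Hadd | rewrite addrA].
exists (p + c); first exact: Hadd.
by rewrite addrA -(addrA x) rowaddxx addr0.
Qed.

Lemma ip_add x (j : 'I_N) p : ip (x + ebasis j) p = ip x p + p 0 j.
Proof.
rewrite /ip; under eq_bigr do rewrite mxE mulrDl.
rewrite big_split /=; congr (_ + _).
rewrite (bigD1 j) //= big1 ?addr0.
  by rewrite /ebasis mxE !eqxx mul1r.
by move=> i hi; rewrite /ebasis mxE eqxx /= (negbTE hi) mul0r.
Qed.

Lemma ip0 (p : 'rV['F_2]_N) : ip 0 p = 0.
Proof. by rewrite /ip big1 // => i _; rewrite mxE mul0r. Qed.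

Lemma row_decomp (x : 'rV['F_2]_N) :
  x = \sum_(j <- [seq j <- index_enum 'I_N | x 0 j != 0]) ebasis j.
Proof.
apply/rowP => i; rewrite summxE big_filter.
case: (F2cases (x 0 i)) => h.
  rewrite h big1 // => j hj; rewrite /ebasis mxE /=.
  case: eqP => [e|] //; by move: hj; rewrite -e h eqxx.
rewrite (bigD1 i) /=; last by rewrite h.
rewrite big1 ?addr0.
  by rewrite h /ebasis mxE !eqxx.
by move=> j /andP [_ hj]; rewrite /ebasis mxE /= eq_sym (negbTE hj).
Qed.

Lemma mainS k (s : seq 'I_N) x :
  doubly_even_code k C -> parity_word s \in C ->
  S x s = S 0 s * sgF (ip x (parity_word s)).
Proof.
move=> hC hp.
set p := parity_word s.
have fact : forall y (j : 'I_N), S (y + ebasis j) s = S y s * sgF (p 0 j).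
  move=> y j; rewrite keyS sum_e_parity -/p (cos_p _ y _ hC hp).
  rewrite mulrAC -mulrA sgsq mulr1 -signr_odd oddD (size_even _ _ hC hp) /=.
  by rewrite /sgF /p mxE; case: (odd (count_mem j s)).
have inv : forall y (j : 'I_N), S (y + ebasis j) s * sgF (ip (y + ebasis j) p)
                       = S y s * sgF (ip y p).
  move=> y j; rewrite fact ip_add sgFD mulrACA.
  have -> : sgF (p 0 j) * sgF (p 0 j) = 1 by case: (F2cases (p 0 j)) => ->.
  by rewrite mulr1.
have all : forall l : seq 'I_N, S (\sum_(j <- l) ebasis j) s *
          sgF (ip (\sum_(j <- l) ebasis j) p) = S 0 s.
  elim => [|j l IH]; first by rewrite big_nil ip0 /sgF eqxx mulr1.
  by rewrite big_cons addrC inv.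
have := all [seq j <- index_enum 'I_N | x 0 j != 0].
rewrite -row_decomp => <-.
rewrite -mulrA.
have -> : sgF (ip x p) * sgF (ip x p) = 1 by case: (F2cases (ip x p)) => ->.
by rewrite mulr1.
Qed.

End S.

Theorem mainTheorem13 (N k : nat) (C : {set 'rV['F_2]_N})
    (d : qvert C -> 'I_N -> bool) (s : seq 'I_N) :
  doubly_even_code k C ->
  adinkra_dashing d ->
  parity_word s \in C ->
  parity_word s != 0 ->
  (forall u : qvert C, gprod d s u u = 1 \/ gprod d s u u = -1) ->
  forall x y : 'rV['F_2]_N,
    gprod d s (cos C x) (cos C x) = gprod d s (cos C y) (cos C y) <->
    ip x (parity_word s) = ip y (parity_word s).
Proof.
move=> hC hD hp _ hM.
have diag : forall x, gprod d s (cos C x) (cos C x) = S _ _ d x s.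
  move=> x; rewrite gprodE sum_e_parity.
  have -> : coset C (x + parity_word s) = val (cos C (x + parity_word s)) by [].
  by rewrite (cos_p _ _ _ x _ hC hp) eqxx.
have h0 : S _ _ d 0 s != 0.
  by case: (hM (cos C 0)); rewrite diag => ->.
move=> x y; rewrite !diag (mainS _ _ _ hD _ _ x hC hp) (mainS _ _ _ hD _ _ y hC hp); split.
  by move/(mulfI h0); apply: sgF_inj.
by move=> ->.
Qed.
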